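(* Fix an integer $t\ge1$ and $\delta\in[0,1)$. For every finite binary input sequence $x$ and all binary sequences $y^1,\dots,y^t$, $$\Pr(Y^1=y^1,\dots,Y^t=y^t\mid X=x)=\Pr(\tilde Y^1=y^1,\dots,\tilde Y^t=y^t\mid X=x),$$ where $(Y^1,\dots,Y^t)$ are the outputs of the $t$-trace deletion channel on input $X$, and $(\tilde Y^1,\dots,\tilde Y^t)$ are the outputs of the cascade in which $X$ is first passed through a deletion channel with deletion probability $\delta^t$, producing $Z$, and then $Z$ is passed through the remnant channel with parameter $\delta$ (with $t$ outputs).
   Context: A deletion channel with deletion probability $q$ deletes each input symbol independently with probability $q$ and outputs the subsequence of undeleted symbols. The $t$-trace deletion channel passes the same input $X$ through $t$ independent deletion channels each with deletion probability $\delta$, giving outputs $Y^1,\dots,Y^t$. The remnant channel with parameter $\delta$ and $t$ outputs acts independently on each input symbol: for each nonempty subset $S\subseteq\{1,\dots,t\}$, with probability $\frac{\delta^{t-|S|}(1-\delta)^{|S|}}{1-\delta^t}$ the symbol is kept (in order) in exactly the outputs indexed by $S$ and deleted from the others; its outputs are $\tilde Y^1,\dots,\tilde Y^t$. In the cascade, the remnant channel acts independently of the first deletion channel given its input. *)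

(* Defs.v *)
From HB Require Import structures.
From mathcomp Require Import all_boot all_order all_algebra.
Set Implicit Arguments. Unset Strict Implicit. Unset Printing Implicit Defensive.
Import Order.TTheory GRing.Theory Num.Theory.
Local Open Scope ring_scope.

Definition del_w (R : realFieldType) (q : R) (n : nat) (m : n.-tuple bool) : R :=
  \prod_(i < n) (if tnth m i then 1 - q else q).

(* Pr(Y^1=y 0,...,Y^t=y (t-1) | X = x) for the t-trace deletion channel:
   t independent deletion patterns, output j is mask (m j) x. *)
Definition trace_prob (R : realFieldType) (t : nat) (delta : R)
    (x : seq bool) (y : 'I_t -> seq bool) : R :=
  \sum_(m : {ffun 'I_t -> (size x).-tuple bool}
          | [forall j, mask (m j) x == y j])
     \prod_(j < t) del_w delta (m j).

(* Probability that the remnant channel sends a symbol to exactly the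
   outputs indexed by the nonempty set S. *)
Definition rem_w (R : realFieldType) (t : nat) (delta : R) (S : {set 'I_t}) : R :=
  delta ^+ (t - #|S|) * (1 - delta) ^+ #|S| / (1 - delta ^+ t).

(* Pr(remnant outputs = y | input z): each symbol i of z is independently
   assigned a nonempty set s_i of outputs; output j keeps the symbols i
   with j \in s_i, in order. *)
Definition rem_prob (R : realFieldType) (t : nat) (delta : R)
    (z : seq bool) (y : 'I_t -> seq bool) : R :=
  \sum_(s : (size z).-tuple {set 'I_t}
          | [forall i, tnth s i != set0] &&
            [forall j, mask [seq (j \in A) | A : {set 'I_t} <- (s : seq {set 'I_t})] z == y j])
     \prod_(i < size z) rem_w delta (tnth s i).

(* Cascade: X through deletion channel with deletion prob delta^t giving
   Z = mask k x, then Z through the remnant channel (independently given Z). *)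
Definition cascade_prob (R : realFieldType) (t : nat) (delta : R)
    (x : seq bool) (y : 'I_t -> seq bool) : R :=
  \sum_(k : (size x).-tuple bool)
     del_w (delta ^+ t) k * rem_prob delta (mask k x) y.

(* Main.v *)
Require Import Defs.
From HB Require Import structures.
From mathcomp Require Import all_boot all_order all_algebra.
From Stdlib Require Import FunctionalExtensionality.
From mathcomp Require Import zify.
Import Order.TTheory GRing.Theory Num.Theory.
Local Open Scope ring_scope.

Section Helpers.
Variable R : realFieldType.

Lemma sum_tupleS (T : finType) n (F : n.+1.-tuple T -> R) :
  \sum_(u : n.+1.-tuple T) F u = \sum_(a : T) \sum_(u : n.-tuple T) F [tuple of a :: u].
Proof.
rewrite pair_big /=.
rewrite (reindex (fun p : T * n.-tuple T => [tuple of p.1 :: p.2])) //=.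
apply: onW_bij.
exists (fun u : n.+1.-tuple T => (thead u, [tuple of behead u])).
- move=> [a u] /=; rewrite theadE; congr pair; exact: val_inj.
- move=> u /=; by rewrite [RHS]tuple_eta.
Qed.

Lemma sum_ffunS t n (F : {ffun 'I_t -> n.+1.-tuple bool} -> R) :
  \sum_(m : {ffun 'I_t -> n.+1.-tuple bool}) F m =
  \sum_(S : {set 'I_t}) \sum_(m : {ffun 'I_t -> n.-tuple bool})
     F [ffun j => [tuple of (j \in S) :: m j]].
Proof.
rewrite pair_big /=.
rewrite (reindex (fun p : {set 'I_t} * {ffun 'I_t -> n.-tuple bool} =>
   [ffun j => [tuple of (j \in p.1) :: p.2 j]])) //=.
apply: onW_bij.
exists (fun m : {ffun 'I_t -> n.+1.-tuple bool} =>
   ([set j | thead (m j)], [ffun j => [tuple of behead (m j)]])).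
- move=> [S m] /=; congr pair.
  + by apply/setP => j; rewrite inE ffunE theadE.
  + by apply/ffunP => j; rewrite !ffunE; apply: val_inj.
- move=> m /=; apply/ffunP => j; rewrite !ffunE inE [RHS]tuple_eta.
  by apply: val_inj.
Qed.

Lemma mask_cons_eq (T : eqType) (c : bool) (m : bitseq) (b : T) x (y : seq T) :
  (mask (c :: m) (b :: x) == y) =
  (c ==> (y == b :: behead y)) && (mask m x == if c then behead y else y).
Proof.
case: c; case: y => [|a y] //=; rewrite ?eqseq_cons ?eqxx ?andbT //.
by rewrite eq_sym.
Qed.

Lemma del_w_cons (d : R) n c (u : n.-tuple bool) :
  del_w d [tuple of c :: u] = (if c then 1 - d else d) * del_w d u.
Proof. by rewrite /del_w big_ord_recl tnth0; congr (_ * _); apply: eq_bigr => i _; rewrite tnthS. Qed.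

Lemma forall_andb (I : finType) (P Q : pred I) :
  [forall i, P i && Q i] = [forall i, P i] && [forall i, Q i].
Proof.
apply/forallP/andP => [H|[/forallP H1 /forallP H2] i].
  by split; apply/forallP => i; case/andP: (H i).
by rewrite H1 H2.
Qed.

Lemma forall_tupleS n (A : {set 'I_n}) m (s : m.-tuple {set 'I_n}) :
  [forall i : 'I_m.+1, tnth [tuple of A :: s] i != set0] =
  (A != set0) && [forall i, tnth s i != set0].
Proof.
apply/forallP/andP => [H|[HA /forallP Hs] i].
  split; first by have := H ord0; rewrite tnth0.
  by apply/forallP => i; have := H (lift ord0 i); rewrite tnthS.
by case: (unliftP ord0 i) => [j ->|->]; rewrite ?tnthS ?tnth0.
Qed.

Definition okS t (b : bool) (y : 'I_t -> seq bool) (S : {set 'I_t}) :=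
  [forall j, (j \in S) ==> (y j == b :: behead (y j))].
Definition yS t (y : 'I_t -> seq bool) (S : {set 'I_t}) :=
  fun j => if j \in S then behead (y j) else y j.

End Helpers.
Arguments okS {t}.
Arguments yS {t}.

Section Steps.
Variable R : realFieldType.
Variable t : nat.
Variable d : R.

Lemma trace_cons b x (y : 'I_t -> seq bool) :
  trace_prob d (b :: x) y =
  \sum_(S : {set 'I_t}) (\prod_(j < t) (if j \in S then 1 - d else d)) *
     (if okS b y S then trace_prob d x (yS y S) else 0).
Proof.
rewrite /trace_prob big_mkcond /= sum_ffunS.
apply: eq_bigr => S _.
have Hc : forall m : {ffun 'I_t -> (size x).-tuple bool},
  [forall j, mask ([ffun j => [tuple of (j \in S) :: m j]] j) (b :: x) == y j]
  = okS b y S && [forall j, mask (m j) x == yS y S j].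
  move=> m; rewrite -forall_andb; apply: eq_forallb => j.
  by rewrite ffunE /= mask_cons_eq.
case: (boolP (okS b y S)) => Hok.
- rewrite mulr_sumr [RHS]big_mkcond; apply: eq_bigr => m _.
  rewrite Hc Hok /=; case: ifP => _ //.
  rewrite -big_split /=; apply: eq_bigr => j _.
  by rewrite ffunE del_w_cons.
- rewrite mulr0; apply: big1 => m _.
  by rewrite Hc (negbTE Hok).
Qed.

Lemma rem_cons b z (y : 'I_t -> seq bool) :
  rem_prob d (b :: z) y =
  \sum_(S : {set 'I_t})
    (if (S != set0) && okS b y S then rem_w d S * rem_prob d z (yS y S) else 0).
Proof.
rewrite /rem_prob big_mkcond /= sum_tupleS.
apply: eq_bigr => A _.
have Hc : forall s : (size z).-tuple {set 'I_t},
  [forall j, mask [seq (j \in B) | B : {set 'I_t} <- ([tuple of A :: s] : seq {set 'I_t})] (b :: z) == y j]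
  = okS b y A && [forall j, mask [seq (j \in B) | B : {set 'I_t} <- (s : seq {set 'I_t})] z == yS y A j].
  move=> s; rewrite -forall_andb; apply: eq_forallb => j.
  by rewrite /= mask_cons_eq.
case: (boolP ((A != set0) && okS b y A)) => /= H.
- case/andP: H => HA Hok.
  rewrite mulr_sumr [RHS]big_mkcond; apply: eq_bigr => s _.
  rewrite forall_tupleS Hc HA Hok /=; case: ifP => _ //.
  by rewrite big_ord_recl tnth0; congr (_ * _); apply: eq_bigr => i _; rewrite tnthS.
- apply: big1 => s _.
  rewrite forall_tupleS Hc.
  by case: (A != set0) H; case: (okS b y A) => //=; rewrite ?andbF.
Qed.

End Steps.

Lemma cascade_cons (R : realFieldType) t (d : R) b x (y : 'I_t -> seq bool) :
  cascade_prob d (b :: x) y =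
  d ^+ t * cascade_prob d x y +
  (1 - d ^+ t) * \sum_(S : {set 'I_t})
    (if (S != set0) && okS b y S then rem_w d S * cascade_prob d x (yS y S) else 0).
Proof.
rewrite /cascade_prob sum_tupleS big_bool /= addrC.
congr (_ + _).
  rewrite mulr_sumr; apply: eq_bigr => u _.
  by rewrite del_w_cons mulrA.
under eq_bigr => u _ do rewrite del_w_cons rem_cons -mulrA mulr_sumr.
rewrite -mulr_sumr; congr (_ * _).
rewrite exchange_big; apply: eq_bigr => S _.
case: ifP => _; last by rewrite big1 // => u _; rewrite mulr0.
rewrite mulr_sumr; apply: eq_bigr => u _.
by rewrite mulrCA.
Qed.

Lemma trace_nil (R : realFieldType) t (d : R) (y : 'I_t -> seq bool) :
  trace_prob d [::] y = ([forall j, [::] == y j])%:R.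
Proof.
rewrite /trace_prob big_mkcond /=.
have H1 : forall m : {ffun 'I_t -> 0.-tuple bool}, \prod_(j < t) del_w d (m j) = 1.
  by move=> m; apply: big1 => j _; rewrite /del_w big_ord0.
under eq_bigr => m _ do rewrite H1.
under eq_bigr => m _ do under eq_forallb => j do rewrite mask0.
rewrite sumr_const card_ffun card_tuple /= exp1n.
by case: [forall j, _].
Qed.

Lemma cascade_nil (R : realFieldType) t (d : R) (y : 'I_t -> seq bool) :
  cascade_prob d [::] y = ([forall j, [::] == y j])%:R.
Proof.
rewrite /cascade_prob.
under eq_bigr => k _ do rewrite /del_w big_ord0 mul1r mask0.
rewrite sumr_const card_tuple /= expn0.
rewrite /rem_prob big_mkcond /=.
have H0 : forall s : 0.-tuple {set 'I_t}, [forall i, tnth s i != set0] = true.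
  by move=> s; apply/forallP => -[].
under eq_bigr => s _ do rewrite H0 big_ord0 /=.
under eq_bigr => s _ do under eq_forallb => j do rewrite mask0.
rewrite sumr_const card_tuple /= expn0 /=.
by case: [forall j, _].
Qed.

Theorem theorem3 (R : realFieldType) (t : nat) (delta : R)
  (ht : (0 < t)%N) (hd0 : 0 <= delta) (hd1 : delta < 1)
  (x : seq bool) (y : 'I_t -> seq bool) :
  trace_prob delta x y = cascade_prob delta x y.
Proof.
have hu : 1 - delta ^+ t != 0.
  by rewrite subr_eq0 eq_sym lt_eqF // exprn_ilt1 // -lt0n.
elim: x y => [|b x IH] y; first by rewrite trace_nil cascade_nil.
rewrite trace_cons cascade_cons.
under eq_bigr => S _ do rewrite IH.
rewrite (bigD1 set0) //=.
have -> : okS b y set0 by apply/forallP => j; rewrite in_set0.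
have -> : yS y set0 = y by apply: functional_extensionality => j; rewrite /yS in_set0.
have -> : \prod_(j < t) (if j \in (set0 : {set 'I_t}) then 1 - delta else delta) = delta ^+ t.
  rewrite (eq_bigr (fun _ => delta)); last by move=> j _; rewrite in_set0.
  by rewrite prodr_const card_ord.
congr (_ + _).
rewrite mulr_sumr [LHS]big_mkcond; apply: eq_bigr => S _.
case: (boolP (S != set0)) => HS /=; last by rewrite mulr0.
case: (okS b y S); last by rewrite !mulr0.
rewrite mulrA; congr (_ * _).
rewrite (bigID (fun j => j \in S)) /=.
rewrite (eq_bigr (fun _ => 1 - delta)); last by move=> j ->.
rewrite (eq_bigr (fun _ => delta)); last by move=> j /negbTE ->.
rewrite prodr_const.
rewrite (eq_bigl (fun j => j \in ~: S)); last by move=> j; rewrite in_setC.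
rewrite prodr_const.
have -> : #|~: S| = (t - #|S|)%N.
  by have := cardsC S; rewrite card_ord; lia.
rewrite /rem_w.
by rewrite [RHS]mulrC divfK // mulrC.
Qed.
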